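(* If $t$ is a positive integer multiple of $3$, then there is no nonzero $z\in\mathcal O_{\mathbb{Q}(\sqrt{-3})}$ that is $2$-powerfully unitarily $t$-perfect, i.e. with $I_2^*(z)=t$.
   Context: $\mathcal O_{\mathbb{Q}(\sqrt{-3})}=\mathbb{Z}[\frac{1+\sqrt{-3}}{2}]$ is a unique factorization domain. $|z|=\sqrt{z\bar z}$, $\arg(z)\in[0,2\pi)$. Let $A$ be the set of nonzero $z\in\mathcal O_{\mathbb{Q}(\sqrt{-3})}$ with $0\le \arg(z)<\pi/3$. Two elements are relatively prime if they have no nonunit common divisor. For nonzero $x,z$, write $x\Diamond z$ iff $x\in A$, $x\mid z$, and $x$ is relatively prime to $z/x$. For $m\in\mathbb{Z}$ define $\delta_m^*(z)=\sum_{x\Diamond z}|x|^m$ and $I_m^*(z)=\delta_m^*(z)/|z|^m$. *)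

(* Defs.v *)
(* Eisenstein integers O_{Q(sqrt -3)} = Z[w], w = (1+sqrt(-3))/2,
   represented by coordinate pairs (a, b) standing for a + b*w. *)
From mathcomp Require Import all_boot all_order all_algebra.
From Stdlib Require Import ClassicalEpsilon.
Set Implicit Arguments. Unset Strict Implicit. Unset Printing Implicit Defensive.
Import Order.TTheory GRing.Theory Num.Theory.
Local Open Scope ring_scope.

Definition eis := (int * int)%type.

Definition eis0 : eis := (0, 0).
Definition eis1 : eis := (1, 0).

(* w^2 = w - 1, hence (a+bw)(c+dw) = (ac - bd) + (ad + bc + bd) w *)
Definition eis_mul (x y : eis) : eis :=
  (x.1 * y.1 - x.2 * y.2, x.1 * y.2 + x.2 * y.1 + x.2 * y.2).

(* |a + b w|^2 = (a + b/2)^2 + 3 b^2/4 = a^2 + a b + b^2 *)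
Definition eis_norm (x : eis) : int := x.1 ^+ 2 + x.1 * x.2 + x.2 ^+ 2.

(* a + b w = (a + b/2) + i (b sqrt3 / 2).  For nonzero z,
   0 <= arg z < pi/3  <->  Im z >= 0 /\ Im z < sqrt3 * Re z  <->  b >= 0 /\ a > 0. *)
Definition inA (x : eis) : Prop := 0 < x.1 /\ 0 <= x.2.

Definition eis_dvd (x z : eis) : Prop := exists y, z = eis_mul x y.

Definition eis_unit (u : eis) : Prop := exists v, eis_mul u v = eis1.

Definition eis_rel_prime (x y : eis) : Prop :=
  forall d, eis_dvd d x -> eis_dvd d y -> eis_unit d.

Definition unitary_div (x z : eis) : Prop :=
  x <> eis0 /\ inA x /\ exists y, z = eis_mul x y /\ eis_rel_prime x y.

(* delta_2^*(z) = sum_{x diamond z} |x|^2.  Every x with x diamond z satisfies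
   x = a + b w with 1 <= a, 0 <= b and a^2+ab+b^2 = |x|^2 <= |z|^2 = N, so
   a, b <= N; the sum is taken over this finite box, which contains all such x. *)
Definition delta2_star (z : eis) : int :=
  let N := `|eis_norm z|%N in
  \sum_(a < N.+1) \sum_(b < N.+1)
     (if excluded_middle_informative (unitary_div ((a : nat)%:Z, (b : nat)%:Z) z)
      then eis_norm ((a : nat)%:Z, (b : nat)%:Z) else 0).

Definition I2_star (z : eis) : rat := (delta2_star z)%:~R / (eis_norm z)%:~R.

(* Main.v *)
Require Import Defs.
From mathcomp Require Import all_boot all_order all_algebra.
From mathcomp Require Import ring lra zify.
From Stdlib Require Import ClassicalEpsilon.
Set Implicit Arguments. Unset Strict Implicit. Unset Printing Implicit Defensive.
Import Order.TTheory GRing.Theory Num.Theory.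
Local Open Scope ring_scope.

Definition eis_add (x y : eis) : eis := (x.1 + y.1, x.2 + y.2).
Definition eis_opp (x : eis) : eis := (- x.1, - x.2).
Definition eis_conj (x : eis) : eis := (x.1 + x.2, - x.2).

Lemma eis_eq (x y : eis) : x.1 = y.1 -> x.2 = y.2 -> x = y.
Proof. by case: x => ? ?; case: y => ? ? /= -> ->. Qed.

Ltac eis_solve := rewrite /eis_mul /eis_add /eis_opp /eis_conj /eis_norm /eis1 /eis0 /=;
  try (apply: eis_eq => /=); ring.

Lemma mulC x y : eis_mul x y = eis_mul y x.
Proof. case: x y => a b [c d]; eis_solve. Qed.
Lemma mulA x y z : eis_mul x (eis_mul y z) = eis_mul (eis_mul x y) z.
Proof. case: x y z => a b [c d] [e f]; eis_solve. Qed.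
Lemma mul1 x : eis_mul eis1 x = x.
Proof. case: x => a b; eis_solve. Qed.
Lemma mul1r x : eis_mul x eis1 = x.
Proof. by rewrite mulC mul1. Qed.
Lemma mul0 x : eis_mul eis0 x = eis0.
Proof. case: x => a b; eis_solve. Qed.
Lemma normM x y : eis_norm (eis_mul x y) = eis_norm x * eis_norm y.
Proof. case: x y => a b [c d]; eis_solve. Qed.
Lemma norm_ge0 x : 0 <= eis_norm x.
Proof. case: x => a b; rewrite /eis_norm /=; nia. Qed.
Lemma norm_eq0 x : eis_norm x = 0 -> x = eis0.
Proof. case: x => a b; rewrite /eis_norm /eis0 /= => H.
have ha : a = 0 by nia. have hb : b = 0 by nia. by rewrite ha hb. Qed.
Lemma norm1 : eis_norm eis1 = 1. Proof. by []. Qed.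
Lemma conjP x : eis_mul x (eis_conj x) = (eis_norm x, 0).
Proof. case: x => a b; eis_solve. Qed.
Lemma mul_distr x y z : eis_mul x (eis_add y z) = eis_add (eis_mul x y) (eis_mul x z).
Proof. case: x y z => a b [c d] [e f]; eis_solve. Qed.

Lemma mul_eq0 x y : eis_mul x y = eis0 -> x = eis0 \/ y = eis0.
Proof. move=> H. have := normM x y. rewrite H /eis_norm /eis0 /= => H2.
have : eis_norm x * eis_norm y = 0 by rewrite -H2 /eis_norm; ring.
move/eqP; rewrite mulf_eq0 => /orP [/eqP/norm_eq0 | /eqP/norm_eq0]; auto. Qed.

Lemma mul_cancel x y z : x <> eis0 -> eis_mul x y = eis_mul x z -> y = z.
Proof. move=> hx H.
have : eis_mul x (eis_add y (eis_opp z)) = eis0.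
  rewrite mul_distr H. case: x z {H hx} => a b [c d]; eis_solve.
case/mul_eq0 => // h. case: y z h {H} => a b [c d] [h1 h2].
apply: eis_eq => /=; lia. Qed.

Lemma unit_norm u : eis_unit u <-> eis_norm u = 1.
Proof. split.
- case=> v H. have := normM u v. rewrite H norm1 => E.
  have := norm_ge0 u; have := norm_ge0 v. move: (eis_norm u) (eis_norm v) E => a b E ha hb.
  have : a <> 0 by move=> z; move: E; rewrite z mul0r.
  have : b <> 0 by move=> z; move: E; rewrite z mulr0.
  nia.
- move=> H. exists (eis_conj u). rewrite conjP H. by [].
Qed.

Lemma unit_mul u v : eis_unit u -> eis_unit v -> eis_unit (eis_mul u v).
Proof. rewrite !unit_norm normM => -> ->. by []. Qed.

Lemma unit_inv u : eis_unit u -> exists v, eis_unit v /\ eis_mul u v = eis1.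
Proof. move=> hu; case: (hu) => v hv; exists v; split => //.
exists u; by rewrite mulC. Qed.

Lemma unit1 : eis_unit eis1. Proof. by exists eis1. Qed.

Lemma unit_nz u : eis_unit u -> u <> eis0.
Proof. move/unit_norm => H E; move: H; rewrite E. by []. Qed.

Lemma nz_norm_pos x : x <> eis0 -> 0 < eis_norm x.
Proof. move=> hx. have := norm_ge0 x. have : eis_norm x <> 0 by move/norm_eq0. move: (eis_norm x) => n. lia. Qed.

Lemma nonunit_norm x : x <> eis0 -> ~ eis_unit x -> 1 < eis_norm x.
Proof. move=> hx hu. have := nz_norm_pos hx. have : eis_norm x <> 1 by move/unit_norm. lia. Qed.

Lemma dvd_refl x : eis_dvd x x. Proof. by exists eis1; rewrite mul1r. Qed.
Lemma dvd_trans x y z : eis_dvd x y -> eis_dvd y z -> eis_dvd x z.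
Proof. move=> [a ->] [b ->]; exists (eis_mul a b); by rewrite mulA. Qed.
Lemma dvd_mulr x y : eis_dvd x (eis_mul x y). Proof. by exists y. Qed.
Lemma dvd_mull x y : eis_dvd y (eis_mul x y). Proof. by exists x; rewrite mulC. Qed.
Lemma dvd_mul_r x y k : eis_dvd x y -> eis_dvd x (eis_mul y k).
Proof. move=> h; apply: dvd_trans h (dvd_mulr _ _). Qed.
Lemma dvd_mul_l x y k : eis_dvd x y -> eis_dvd x (eis_mul k y).
Proof. move=> h; apply: dvd_trans h (dvd_mull _ _). Qed.
Lemma dvd_add x y z : eis_dvd x y -> eis_dvd x z -> eis_dvd x (eis_add y z).
Proof. move=> [a ->] [b ->]; exists (eis_add a b); by rewrite mul_distr. Qed.
Lemma dvd_unit d u : eis_unit u -> eis_dvd d u -> eis_unit d.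
Proof. move=> [v hv] [k hk]; exists (eis_mul k v). by rewrite mulA -hk. Qed.
Lemma unit_dvd u x : eis_unit u -> eis_dvd u x.
Proof. move=> [v hv]; exists (eis_mul v x). by rewrite mulA hv mul1. Qed.
Lemma dvd_unit_mul d u y : eis_unit u -> eis_dvd d (eis_mul u y) -> eis_dvd d y.
Proof. move=> hu h. case: (unit_inv hu) => v [_ hv].
have -> : y = eis_mul v (eis_mul u y) by rewrite mulA (mulC v) hv mul1.
by apply: dvd_mul_l. Qed.
Lemma dvd_norm x y : y <> eis0 -> eis_dvd x y -> eis_norm x <= eis_norm y.
Proof. move=> hy [k hk]. have hk0 : k <> eis0 by move=> E; apply: hy; rewrite hk E mulC mul0.
have := nz_norm_pos hk0; have := norm_ge0 x. rewrite hk normM. nia. Qed.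
Lemma dvd_cancel q x y : q <> eis0 -> eis_dvd (eis_mul q x) (eis_mul q y) -> eis_dvd x y.
Proof. move=> hq [k hk]; exists k; apply: (mul_cancel hq); by rewrite hk mulA. Qed.
Lemma dvd0 x : eis_dvd x eis0. Proof. by exists eis0; rewrite mulC mul0. Qed.

Lemma round (m n0 : int) : 0 < n0 -> exists q, - n0 <= 2 * (m - q * n0) < n0.
Proof. move=> hn. exists ((2 * m + n0) %/ (2 * n0))%Z.
have h2 : (2 * n0 != 0) by lia.
have := divz_eq (2 * m+n0) (2 * n0). have := modz_ge0 (2 * m+n0) h2.
have : 0 < 2 * n0 by lia. move/(ltz_pmod (2 * m+n0)).
move: ((2 * m+n0) %/ (2 * n0))%Z ((2 * m+n0) %% (2 * n0))%Z => q s. lia. Qed.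

Lemma eis_div x y : y <> eis0 -> exists q r, x = eis_add (eis_mul q y) r /\ eis_norm r < eis_norm y.
Proof. move=> hy. have hn := nz_norm_pos hy.
case: (round ((eis_mul x (eis_conj y)).1) hn) => q1 hq1.
case: (round ((eis_mul x (eis_conj y)).2) hn) => q2 hq2.
pose q : eis := (q1, q2). pose r := eis_add x (eis_opp (eis_mul q y)).
exists q, r; split.
  rewrite /r; case: x y q {hy hn hq1 hq2 r} => a b [c d] [e f]; eis_solve.
have E : eis_norm r * eis_norm y =
  ((eis_mul x (eis_conj y)).1 - q1 * eis_norm y)^+2 +
  ((eis_mul x (eis_conj y)).1 - q1 * eis_norm y) * ((eis_mul x (eis_conj y)).2 - q2 * eis_norm y) +
  ((eis_mul x (eis_conj y)).2 - q2 * eis_norm y)^+2.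
  rewrite /r /q; case: x y {hy hn hq1 hq2 r q} => a b [c d]; eis_solve.
move: E hq1 hq2 hn. have := norm_ge0 r.
move: (eis_norm r) (eis_norm y) ((eis_mul x (eis_conj y)).1) ((eis_mul x (eis_conj y)).2) => R n m1 m2.
move=> hR E h1 h2 hn.
set u := m1 - q1 * n in E h1. set v := m2 - q2 * n in E h2.
have : 4 * (u^+2 + u * v + v^+2) <= 3 * n^+2 by nia.
nia. Qed.

Lemma bezout x y : exists g s t, eis_dvd g x /\ eis_dvd g y /\
  g = eis_add (eis_mul s x) (eis_mul t y).
Proof.
move: {2}`|eis_norm y|%N (leqnn `|eis_norm y|%N) => k.
elim: k x y => [|k IH] x y hk.
  have hy : y = eis0.
    apply: norm_eq0. have := norm_ge0 y. move: hk. move: (eis_norm y) => n. lia.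
  exists x, eis1, eis0; split; [exact: dvd_refl|split].
    rewrite hy; exact: dvd0.
  rewrite mul1 mul0. case: x => a b; eis_solve.
case: (eis_norm y =P 0) => [/norm_eq0 hy|hy].
  exists x, eis1, eis0; split; [exact: dvd_refl|split].
    rewrite hy; exact: dvd0.
  rewrite mul1 mul0. case: x => a b; eis_solve.
have hy' : y <> eis0 by move=> E; apply: hy; rewrite E.
case: (eis_div x hy') => q [r [hx hr]].
have hk' : (`|eis_norm r| <= k)%N.
  have := norm_ge0 r. move: hk hr. move: (eis_norm r) (eis_norm y) => a b. lia.
case: (IH y r hk') => g [s [t [gy [gr hg]]]].
exists g, t, (eis_add s (eis_opp (eis_mul t q))); split.
  rewrite hx; apply: dvd_add => //; exact: dvd_mul_l.
split => //.
rewrite hg hx. clear.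
case: r y q s t => a b [c d] [e f] [g h] [i j]; eis_solve.
Qed.

Definition irred (p : eis) := p <> eis0 /\ ~ eis_unit p /\
  forall c d, p = eis_mul c d -> eis_unit c \/ eis_unit d.
Definition eprime (p : eis) := p <> eis0 /\ ~ eis_unit p /\
  forall a b, eis_dvd p (eis_mul a b) -> eis_dvd p a \/ eis_dvd p b.

Lemma irred_prime p : irred p -> eprime p.
Proof. case=> hp0 [hpu hp]; split => //; split => // a b hab.
case: (classic (eis_dvd p a)) => hpa; [by left|right].
case: (bezout p a) => g [s [t [gp [ga hg]]]].
case: (gp) => c hc. case: (hp _ _ hc) => [gu|cu].
  case: (unit_inv gu) => h [_ hgh].
  have -> : b = eis_add (eis_mul p (eis_mul s (eis_mul b h))) (eis_mul (eis_mul a b) (eis_mul t h)).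
    have : b = eis_mul b (eis_mul g h) by rewrite hgh mul1r.
    rewrite hg => {1}->. case: p a b s t h {hgh hab hpa gp ga hg hc hp hp0 hpu} => ? ? [? ?] [? ?] [? ?] [? ?] [? ?]; eis_solve.
  apply: dvd_add; [exact: dvd_mulr| exact: dvd_mul_r].
exfalso; apply: hpa. case: (unit_inv cu) => h [_ hch].
apply: dvd_trans ga. exists h. by rewrite hc -mulA hch mul1r.
Qed.

Lemma irred_exists z : z <> eis0 -> ~ eis_unit z -> exists p, irred p /\ eis_dvd p z.
Proof.
move: {2}`|eis_norm z|%N (leqnn `|eis_norm z|%N) => k.
elim: k z => [|k IH] z hk hz hu.
  exfalso; have := nz_norm_pos hz; move: hk; move: (eis_norm z) => n; lia.
case: (classic (irred z)) => hi; first by exists z; split => //; exact: dvd_refl.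
have : exists c d, z = eis_mul c d /\ ~ eis_unit c /\ ~ eis_unit d.
  apply: NNPP => hn; apply: hi; split => //; split => // c d hcd.
  apply: NNPP => hh; apply: hn; exists c, d; split => //; split => h; apply: hh; auto.
case=> c [d [hcd [hc hd]]].
have hc0 : c <> eis0 by move=> E; apply: hz; rewrite hcd E mul0.
have hd0 : d <> eis0 by move=> E; apply: hz; rewrite hcd E mulC mul0.
have hk' : (`|eis_norm c| <= k)%N.
  have := nonunit_norm hd0 hd; have := nz_norm_pos hc0; have := normM c d. rewrite -hcd.
  move: hk; move: (eis_norm z) (eis_norm c) (eis_norm d) => a b e. nia.
case: (IH c hk' hc0 hc) => p [pi pc]; exists p; split => //.
rewrite hcd; exact: dvd_mul_r.
Qed.

Fixpoint epow (p : eis) (e : nat) : eis :=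
  match e with O => eis1 | S e' => eis_mul p (epow p e') end.

Lemma prime_div_exists d : d <> eis0 -> ~ eis_unit d -> exists r, eprime r /\ eis_dvd r d.
Proof. move=> h1 h2; case: (irred_exists h1 h2) => p [pi pd]; exists p; split => //.
exact: irred_prime. Qed.

Lemma prime_assoc r p : eprime r -> eprime p -> eis_dvd r p -> eis_dvd p r.
Proof. move=> [r0 [ru _]] [p0 [pu pp]] [c hc].
case: (pp r c); first by rewrite -hc; exact: dvd_refl.
  by [].
move=> [k hk]. exfalso; apply: ru. exists k.
apply: (mul_cancel p0). by rewrite mul1r mulA (mulC p r) -mulA -hk -hc. Qed.

Lemma prime_dvd_pow r p e : eprime r -> eis_dvd r (epow p e) -> eis_dvd r p.
Proof. move=> hr. elim: e => [|e IH] /= h.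
  case: hr => _ [ru _]; exfalso; apply: ru; apply: dvd_unit h; exact: unit1.
case: hr => _ [_ rp]. case: (rp _ _ h) => //. Qed.

Lemma pow_dvd p e : (0 < e)%N -> eis_dvd p (epow p e).
Proof. case: e => // e _ /=; exact: dvd_mulr. Qed.

Lemma pow_nz p e : p <> eis0 -> epow p e <> eis0.
Proof. move=> hp; elim: e => [|e IH] /=; first by [].
by case/mul_eq0. Qed.

Lemma pow_coprime_dvd p e x y : eprime p -> eis_dvd (epow p e) (eis_mul x y) ->
  ~ eis_dvd p y -> eis_dvd (epow p e) x.
Proof. move=> hp. elim: e x => [|e IH] x /= h hy.
  by exists x; rewrite mul1.
have hp' := hp. case: hp' => p0 [_ pp].
case: (pp x y) => //; first by apply: dvd_trans h; exact: dvd_mulr.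
move=> [x1 hx1]. have : eis_dvd (epow p e) (eis_mul x1 y).
  apply: (dvd_cancel p0). by rewrite mulA -hx1.
move/IH => /(_ hy) [k hk]. exists k. by rewrite hx1 hk mulA. Qed.

Lemma factor p z : eprime p -> z <> eis0 -> eis_dvd p z ->
  exists e w, (0 < e)%N /\ z = eis_mul (epow p e) w /\ ~ eis_dvd p w.
Proof.
move=> hp. case: (hp) => p0 [pu _].
move: {2}`|eis_norm z|%N (leqnn `|eis_norm z|%N) => k.
elim: k z => [|k IH] z hk hz hd.
  exfalso; have := nz_norm_pos hz; move: hk; move: (eis_norm z) => n; lia.
case: hd => z1 hz1.
have hz10 : z1 <> eis0 by move=> E; apply: hz; rewrite hz1 E mulC mul0.
case: (classic (eis_dvd p z1)) => h.
  have hk' : (`|eis_norm z1| <= k)%N.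
    have := nonunit_norm p0 pu; have := nz_norm_pos hz10; have := normM p z1. rewrite -hz1.
    move: hk; move: (eis_norm z) (eis_norm p) (eis_norm z1) => a b e. nia.
  case: (IH z1 hk' hz10 h) => e [w [he [hw hpw]]].
  exists e.+1, w; split => //; split => //. by rewrite hz1 hw /= mulA.
exists 1%N, z1; split => //; split => //. by rewrite /= mul1r.
Qed.

Definition nu (x : eis) : eis :=
  let a := x.1 in let b := x.2 in
  if (0 < a) && (0 <= b) then (1, 0)
  else if (a <= 0) && (0 < a + b) then (1, -1)
  else if (0 < b) && (a + b <= 0) then (0, -1)
  else if (a < 0) && (b <= 0) then (-1, 0)
  else if (0 <= a) && (a + b < 0) then (-1, 1)
  else (0, 1).

Lemma nu_unit x : eis_unit (nu x).
Proof. apply/unit_norm; rewrite /nu; repeat case: ifP => _; by []. Qed.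

Lemma nu_A x : x <> eis0 -> inA (eis_mul (nu x) x).
Proof. case: x => a b hx. have hx' : a <> 0 \/ b <> 0.
  case: (a =P 0) => [ha|]; last by left. case: (b =P 0) => [hb|]; last by right.
  by exfalso; apply: hx; rewrite ha hb.
rewrite /nu /inA /eis_mul /=.
repeat (case: ifP => /= [/andP []|]); lia. Qed.

Lemma inA_nz x : inA x -> x <> eis0.
Proof. case: x => a b [h1 h2] [E _]; move: h1; rewrite E. by []. Qed.

Lemma uniqA x u : inA x -> eis_unit u -> inA (eis_mul u x) -> u = eis1.
Proof. case: x => a b; case: u => c d [/= ha hb] /unit_norm; rewrite /eis_norm /= => hn.
have hc : c = -1 \/ c = 0 \/ c = 1 by nia.
have hd : d = -1 \/ d = 0 \/ d = 1 by nia.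
rewrite /inA /eis_mul /eis1 /=. move: hn.
case: hc => [->|[->|->]]; case: hd => [->|[->|->]] => /= hn [h1 h2];
  first [reflexivity | exfalso; lia]. Qed.

Lemma unitA x : inA x -> eis_unit x -> x = eis1.
Proof. move=> hA hu. apply: (uniqA (x:=eis1) _ hu). by split. by rewrite mul1r. Qed.

Lemma rel_prime_of x y : x <> eis0 ->
  (forall r, eprime r -> eis_dvd r x -> eis_dvd r y -> False) -> eis_rel_prime x y.
Proof. move=> hx H d dx dy. apply: NNPP => hd.
have d0 : d <> eis0 by move=> E; apply: hx; case: dx => k ->; rewrite E mul0.
case: (prime_div_exists d0 hd) => r [pr rd].
apply: (H r pr); exact: dvd_trans rd _. Qed.

Lemma prime_nunit r : eprime r -> ~ eis_unit r. Proof. by case=> _ []. Qed.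
Lemma prime_nz r : eprime r -> r <> eis0. Proof. by case. Qed.
Lemma prime_mul r a b : eprime r -> eis_dvd r (eis_mul a b) -> eis_dvd r a \/ eis_dvd r b.
Proof. case=> _ [_ h]; exact: h. Qed.

Lemma mulCA x y z : eis_mul x (eis_mul y z) = eis_mul y (eis_mul x z).
Proof. by rewrite !mulA (mulC x). Qed.

Section Claims.
Variables (p w : eis) (e : nat).
Hypotheses (hp : eprime p) (he : (0 < e)%N) (hw0 : w <> eis0) (hpw : ~ eis_dvd p w).
Let q := epow p e.
Let z := eis_mul q w.
Let q0 : q <> eis0. Proof. exact: pow_nz (prime_nz hp). Qed.

Lemma claimA1 x : unitary_div x z -> ~ eis_dvd p x -> unitary_div x w.
Proof. move=> [x0 [xA [y [hz hxy]]]] hpx. split => //; split => //.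
have : eis_dvd q (eis_mul y x) by rewrite mulC -hz; exact: dvd_mulr.
move/(pow_coprime_dvd hp)/(_ hpx) => [y' hy']. exists y'; split.
  apply: (mul_cancel q0). by rewrite -/z hz hy' mulCA.
move=> d dx dy; apply: hxy => //. rewrite hy'; exact: dvd_mul_l.
Qed.

Lemma claimA2 x : unitary_div x w -> unitary_div x z /\ ~ eis_dvd p x.
Proof. move=> [x0 [xA [y' [hw hxy]]]].
have hpx : ~ eis_dvd p x by move=> h; apply: hpw; rewrite hw; exact: dvd_mul_r.
split => //; split => //; split => //. exists (eis_mul q y'); split.
  by rewrite /z hw mulCA.
apply: rel_prime_of => // r pr rx.
case/(prime_mul pr) => [rq|ry].
  apply: hpx; apply: dvd_trans rx. apply: prime_assoc => //. exact: prime_dvd_pow rq.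
exact: (prime_nunit pr (hxy r rx ry)).
Qed.

Definition Mq d := eis_mul (nu (eis_mul d q)) (eis_mul d q).

Lemma claimB1 x : unitary_div x z -> eis_dvd p x -> exists d, unitary_div d w /\ x = Mq d.
Proof. move=> [x0 [xA [y [hz hxy]]]] hpx.
have hpy : ~ eis_dvd p y by move=> h; exact: (prime_nunit hp (hxy p hpx h)).
have : eis_dvd q (eis_mul x y) by rewrite -hz; exact: dvd_mulr.
move/(pow_coprime_dvd hp)/(_ hpy) => [d hd].
have d0 : d <> eis0 by move=> E; apply: x0; rewrite hd E mulC mul0.
have hwd : w = eis_mul d y. apply: (mul_cancel q0). by rewrite -/z hz hd mulA.
case: (unit_inv (nu_unit d)) => v [vu hv].
exists (eis_mul (nu d) d); split.
  split. by apply: inA_nz; apply: nu_A.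
  split. by apply: nu_A.
  exists (eis_mul v y); split.
    by rewrite hwd mulA -(mulA (nu d)) (mulC d v) mulA hv mul1 .
  move=> f f1 f2. apply: hxy.
    rewrite hd; apply: dvd_mul_l. exact: dvd_unit_mul (nu_unit d) f1.
  exact: dvd_unit_mul vu f2.
rewrite /Mq. set y0 := eis_mul (eis_mul (nu d) d) q.
have E : eis_mul (nu y0) y0 = eis_mul (eis_mul (nu y0) (nu d)) x.
  have gen : forall U V Q D, eis_mul U (eis_mul (eis_mul V D) Q) = eis_mul (eis_mul U V) (eis_mul Q D).
    by move=> [? ?] [? ?] [? ?] [? ?]; eis_solve.
  rewrite hd /y0; exact: gen.
have y00 : y0 <> eis0.
  move/mul_eq0 => [/mul_eq0 [E1|E1]|E1]; [exact: (unit_nz (nu_unit d) E1)|exact: d0 E1|exact: q0 E1].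
have := nu_A y00. rewrite E => hA.
by rewrite (uniqA xA (unit_mul (nu_unit _) (nu_unit _)) hA) mul1.
Qed.


Lemma dq_nz d : d <> eis0 -> eis_mul d q <> eis0.
Proof. by move=> d0 /mul_eq0 [|]. Qed.

Lemma claimB2 d : unitary_div d w -> unitary_div (Mq d) z /\ eis_dvd p (Mq d).
Proof. move=> [d0 [dA [y' [hw hdy]]]].
have dq0 := dq_nz d0.
case: (unit_inv (nu_unit (eis_mul d q))) => v [vu hv].
have MA : inA (Mq d) by apply: nu_A.
have M0 : Mq d <> eis0 by apply: inA_nz.
have hpM : eis_dvd p (Mq d).
  apply: dvd_mul_l. apply: dvd_mul_l. exact: pow_dvd.
split => //. split => //; split => //.
exists (eis_mul v y'); split.
  have gen : forall U V Q D Y, eis_mul (eis_mul U (eis_mul D Q)) (eis_mul V Y) =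
            eis_mul (eis_mul U V) (eis_mul Q (eis_mul D Y)).
    by move=> [? ?] [? ?] [? ?] [? ?] [? ?]; eis_solve.
  by rewrite /z hw /Mq gen hv mul1.
apply: rel_prime_of => // r pr rM /(dvd_unit_mul vu) ry.
have : eis_dvd r (eis_mul d q) by apply: dvd_unit_mul (nu_unit _) rM.
case/(prime_mul pr) => [rd|rq].
  exact: (prime_nunit pr (hdy r rd ry)).
apply: hpw; rewrite hw; apply: dvd_mul_l. apply: dvd_trans ry.
apply: prime_assoc => //. exact: prime_dvd_pow rq.
Qed.

Lemma Mq_inj d1 d2 : unitary_div d1 w -> unitary_div d2 w -> Mq d1 = Mq d2 -> d1 = d2.
Proof. move=> [d10 [d1A _]] [d20 [d2A _]]. rewrite /Mq.
move: (nu (eis_mul d1 q)) (nu_unit (eis_mul d1 q)) (nu (eis_mul d2 q)) (nu_unit (eis_mul d2 q)).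
move=> U1 u1 U2 u2 E.
case: (unit_inv u2) => V [vu hv].
have gen3 : forall U D Q, eis_mul U (eis_mul D Q) = eis_mul Q (eis_mul U D).
  by move=> [? ?] [? ?] [? ?]; eis_solve.
have E' : eis_mul q (eis_mul U1 d1) = eis_mul q (eis_mul U2 d2).
  by rewrite -[LHS]gen3 -[RHS]gen3.
have E1 := mul_cancel q0 E'.
have E2 : d2 = eis_mul (eis_mul V U1) d1.
  by rewrite -mulA E1 mulA (mulC V U2) hv mul1.
have hA : inA (eis_mul (eis_mul V U1) d1) by rewrite -E2.
by rewrite E2 (uniqA d1A (unit_mul vu u1) hA) mul1.
Qed.

Lemma Mq_norm d : eis_norm (Mq d) = eis_norm d * eis_norm q.
Proof. rewrite /Mq !normM. have := nu_unit (eis_mul d q). move/unit_norm => ->. by rewrite GRing.mul1r. Qed.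

End Claims.

Definition box_sum (M : nat) (P : eis -> Prop) (f : eis -> int) : int :=
  \sum_(a < M.+1) \sum_(b < M.+1)
     (if excluded_middle_informative (P ((a : nat)%:Z, (b : nat)%:Z))
      then f ((a : nat)%:Z, (b : nat)%:Z) else 0).

Lemma delta_box z : delta2_star z = box_sum `|eis_norm z|%N (fun x => unitary_div x z) eis_norm.
Proof. by []. Qed.

Lemma box_widen K M (P : eis -> Prop) (f : eis -> int) : (K <= M)%N ->
  (forall x, P x -> x.1 <= K%:Z /\ x.2 <= K%:Z) -> box_sum M P f = box_sum K P f.
Proof. move=> hKM hP. elim: M hKM => [|M IH] hKM.
  by have -> : K = 0%N by lia.
case: (K =P M.+1) => [->//|hne]. have hK : (K <= M)%N by lia.
rewrite -IH // /box_sum big_ord_recr /=.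
have -> : \sum_(b < M.+2) (if excluded_middle_informative (P ((M.+1)%:Z, (b : nat)%:Z))
      then f ((M.+1)%:Z, (b : nat)%:Z) else 0) = 0.
  apply: big1 => b _. case: excluded_middle_informative => // /hP /= [h _]. exfalso; lia.
rewrite addr0; apply: eq_bigr => a _. rewrite big_ord_recr /=.
rewrite [X in _ + X](_ : _ = 0) ?addr0 //.
case: excluded_middle_informative => // /hP /= [_ h]; exfalso; lia.
Qed.

Definition asb (P : Prop) : bool := if excluded_middle_informative P then true else false.
Lemma asbP P : asb P <-> P.
Proof. rewrite /asb; case: excluded_middle_informative => //. Qed.

Definition ofB K (i : 'I_K.+1 * 'I_K.+1) : eis := ((i.1 : nat)%:Z, (i.2 : nat)%:Z).
Definition toB K (x : eis) : 'I_K.+1 * 'I_K.+1 := (inord `|x.1|%N, inord `|x.2|%N).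

Lemma box_sum_set K (P : eis -> Prop) (f : eis -> int) : box_sum K P f =
  \sum_(i : 'I_K.+1 * 'I_K.+1 | asb (P (ofB i))) f (ofB i).
Proof. rewrite /box_sum pair_bigA /= [RHS]big_mkcond /=; apply: eq_bigr => i _.
by rewrite /asb /ofB; case: excluded_middle_informative. Qed.

Lemma toBK K (i : 'I_K.+1 * 'I_K.+1) : toB K (ofB i) = i.
Proof. case: i => a b. rewrite /toB /ofB /=. by congr pair; apply: val_inj; rewrite /= inordK. Qed.

Lemma ofBK K x : 0 <= x.1 <= K%:Z -> 0 <= x.2 <= K%:Z -> ofB (toB K x) = x.
Proof. case: x => a b /= h1 h2. rewrite /ofB /toB /= !inordK; try lia.
apply: eis_eq => /=; lia. Qed.

Lemma inA_bound x : inA x -> 0 <= x.1 <= eis_norm x /\ 0 <= x.2 <= eis_norm x.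
Proof. case: x => a b [/= ha hb]. rewrite /eis_norm /=. split; nia. Qed.

Lemma ud_bound x z : z <> eis0 -> unitary_div x z ->
  0 <= x.1 <= eis_norm z /\ 0 <= x.2 <= eis_norm z.
Proof. move=> z0 [x0 [xA [y [hz _]]]]. have := dvd_norm z0 (ex_intro _ y hz).
have := inA_bound xA. lia. Qed.

Lemma step p w e : eprime p -> (0 < e)%N -> w <> eis0 -> ~ eis_dvd p w ->
  delta2_star (eis_mul (epow p e) w) = delta2_star w * (1 + eis_norm (epow p e)).
Proof.
move=> hp he w0 hpw.
have q0 : epow p e <> eis0 := @pow_nz p e (prime_nz hp).
have z0 : eis_mul (epow p e) w <> eis0 by case/mul_eq0.
have hNw : eis_norm w <= eis_norm (eis_mul (epow p e) w).
  rewrite normM. have := nz_norm_pos q0; have := norm_ge0 w.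
  move: (eis_norm w) (eis_norm (epow p e)) => a b. nia.
set q := epow p e in q0 hNw *. set z := eis_mul q w in z0 hNw *.
set K := `|eis_norm z|%N.
have hK : K%:Z = eis_norm z by rewrite /K; have := norm_ge0 z; lia.
have bz : forall x, unitary_div x z -> 0 <= x.1 <= K%:Z /\ 0 <= x.2 <= K%:Z.
  move=> x /(ud_bound z0). rewrite hK. lia.
have bw : forall x, unitary_div x w -> 0 <= x.1 <= K%:Z /\ 0 <= x.2 <= K%:Z.
  move=> x /(ud_bound w0). rewrite hK. lia.
have Ew : delta2_star w = box_sum K (fun x => unitary_div x w) eis_norm.
  rewrite delta_box (@box_widen `|eis_norm w|%N K) //.
    have := norm_ge0 w. lia.
  move=> x /(ud_bound w0). have := norm_ge0 w. lia.
have Esplit : box_sum K (fun x => unitary_div x z) eis_norm =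
   box_sum K (fun x => unitary_div x w) eis_norm +
   box_sum K (fun x => unitary_div x z /\ eis_dvd p x) eis_norm.
  rewrite /box_sum -big_split; apply: eq_bigr => a _; rewrite -big_split; apply: eq_bigr => b _ /=.
  set x := (_, _).
  case: (excluded_middle_informative (unitary_div x z)) => h1;
  case: (excluded_middle_informative (unitary_div x w)) => h2;
  case: (excluded_middle_informative (unitary_div x z /\ eis_dvd p x)) => h3 /=.
  - by exfalso; case: (claimA2 e hp hpw h2) => _; case: h3.
  - by rewrite addr0.
  - by rewrite add0r.
  - by exfalso; apply: h2; apply: (claimA1 hp h1) => hd; apply: h3.
  - by exfalso; apply: h1; case: h3.
  - by exfalso; apply: h1; case: (claimA2 e hp hpw h2).
  - by exfalso; apply: h1; case: h3.
  - by rewrite addr0.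
have Ebij : box_sum K (fun x => unitary_div x z /\ eis_dvd p x) eis_norm =
    box_sum K (fun x => unitary_div x w) eis_norm * eis_norm q.
  rewrite !box_sum_set big_distrl /=.
  pose Sw := [set i : 'I_K.+1 * 'I_K.+1 | asb (unitary_div (ofB i) w)].
  pose h := fun i : 'I_K.+1 * 'I_K.+1 => toB K (Mq p e (ofB i)).
  have ES : [set i : 'I_K.+1 * 'I_K.+1 | asb (unitary_div (ofB i) z /\ eis_dvd p (ofB i))] = h @: Sw.
    apply/setP => i; rewrite inE; apply/idP/imsetP.
    - move/asbP => [hU hd]. case: (claimB1 hp hU hd) => d [dU hdx].
      have [b1 b2] := bw d dU.
      exists (toB K d).
        by rewrite inE; apply/asbP; rewrite ofBK.
      by rewrite /h ofBK // -hdx toBK.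
    - case=> j; rewrite inE => /asbP hj ->. apply/asbP.
      have [hU hd] := claimB2 hp he hpw hj.
      have [b1 b2] := bz _ hU.
      by rewrite /h ofBK.
  transitivity (\sum_(i in h @: Sw) eis_norm (ofB i)).
    rewrite -ES. apply: eq_bigl => i. by rewrite inE.
  rewrite big_imset.
    apply: eq_big => i; first by rewrite inE.
    rewrite inE => /asbP hi.
    have [hU _] := claimB2 hp he hpw hi.
    have [b1 b2] := bz _ hU.
    by rewrite /h ofBK // Mq_norm.
  move=> i j; rewrite !inE => /asbP hi /asbP hj /(congr1 (@ofB K)).
  have [hU1 _] := claimB2 hp he hpw hi.
  have [hU2 _] := claimB2 hp he hpw hj.
  have [b1 b2] := bz _ hU1. have [b3 b4] := bz _ hU2.
  rewrite !ofBK // => /(Mq_inj hp hi hj) /(congr1 (toB K)). by rewrite !toBK.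
rewrite delta_box -/K Esplit Ebij Ew. ring.
Qed.

Definition good (n : int) := exists k, n = 3 * k + 1 \/ n = 3 * k + 2.

Lemma norm_mod3 x : exists k, eis_norm x = 3 * k \/ eis_norm x = 3 * k + 1.
Proof. case: x => a b. rewrite /eis_norm /=.
have h3 : (3 : int) != 0 by []. have h3' : (0 : int) < 3 by [].
have hr1 := modz_ge0 a h3; have hr2 := ltz_pmod a h3'.
have hs1 := modz_ge0 b h3; have hs2 := ltz_pmod b h3'.
have Ea := divz_eq a 3; have Eb := divz_eq b 3.
move: (a %/ 3)%Z (a %% 3)%Z (b %/ 3)%Z (b %% 3)%Z Ea Eb hr1 hr2 hs1 hs2 => a' r b' s -> -> hr1 hr2 hs1 hs2.
have hr : r = 0 \/ r = 1 \/ r = 2 by lia.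
have hs : s = 0 \/ s = 1 \/ s = 2 by lia.
pose k0 := fun r s : int => 3 * a'^+2 + 2 * a' * r + 3 * a' * b' + a' * s + r * b' + 3 * b'^+2 + 2 * b' * s.
case: hr => [->|[->|->]]; case: hs => [->|[->|->]].
- by exists (k0 0 0); left; rewrite /k0; ring.
- by exists (k0 0 1); right; rewrite /k0; ring.
- by exists (k0 0 2 + 1); right; rewrite /k0; ring.
- by exists (k0 1 0); right; rewrite /k0; ring.
- by exists (k0 1 1 + 1); left; rewrite /k0; ring.
- by exists (k0 1 2 + 2); right; rewrite /k0; ring.
- by exists (k0 2 0 + 1); right; rewrite /k0; ring.
- by exists (k0 2 1 + 2); right; rewrite /k0; ring.
- by exists (k0 2 2 + 4); left; rewrite /k0; ring.
Qed.

Lemma good_mul m n : good m -> good n -> good (m * n).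
Proof. move=> [k [->|->]] [l [->|->]].
- by exists (3 * k * l + k + l); left; ring.
- by exists (3 * k * l + 2 * k + l); right; ring.
- by exists (3 * k * l + k + 2 * l); right; ring.
- by exists (3 * k * l + 2 * k + 2 * l + 1); left; ring.
Qed.

Lemma good_norm1 x : good (1 + eis_norm x).
Proof. case: (norm_mod3 x) => k [->|->]; exists k; lia. Qed.

Lemma ud_one z : eis_unit z -> unitary_div eis1 z.
Proof. move=> hz. split; first by []. split; first by split.
exists z; split; first by rewrite mul1.
move=> d hd _; exact: dvd_unit unit1 hd. Qed.

Lemma exmiT (P : Prop) (a b : int) : P -> (if excluded_middle_informative P then a else b) = a.
Proof. by case: excluded_middle_informative. Qed.
Lemma exmiF (P : Prop) (a b : int) : ~ P -> (if excluded_middle_informative P then a else b) = b.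
Proof. by case: excluded_middle_informative. Qed.

Lemma delta_unit z : eis_unit z -> delta2_star z = 1.
Proof. move=> hz. have hN := proj1 (unit_norm z) hz.
rewrite delta_box hN /box_sum /= !big_ord_recl !big_ord0 /=.
have -> : bump 0 0 = 1%N by [].
have H00 : ~ unitary_div (Posz 0, Posz 0) z by case=> _ [[/= h _] _]; lia.
have H01 : ~ unitary_div (Posz 0, Posz 1) z by case=> _ [[/= h _] _]; lia.
have H10 : unitary_div (Posz 1, Posz 0) z by exact: ud_one.
have H11 : ~ unitary_div (Posz 1, Posz 1) z.
  case=> _ [_ [y [hy _]]].
  have := dvd_unit hz (ex_intro _ y hy). by move/unit_norm.
rewrite (exmiF _ _ H00) (exmiF _ _ H01) (exmiT _ _ H10) (exmiF _ _ H11).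
by [].
Qed.

Lemma good_delta z : z <> eis0 -> good (delta2_star z).
Proof.
move: {2}`|eis_norm z|%N (leqnn `|eis_norm z|%N) => k.
elim: k z => [|k IH] z hk hz.
  exfalso; have := nz_norm_pos hz; move: hk; move: (eis_norm z) => n; lia.
case: (classic (eis_unit z)) => hu.
  by rewrite delta_unit //; exists 0; left.
case: (prime_div_exists hz hu) => p [hp hpz].
case: (factor hp hz hpz) => e [w [he [hzw hpw]]].
have w0 : w <> eis0 by move=> E; apply: hz; rewrite hzw E mulC mul0.
have q0 : epow p e <> eis0 := @pow_nz p e (prime_nz hp).
have qu : ~ eis_unit (epow p e).
  move=> hq; apply: (prime_nunit hp); exact: dvd_unit hq (pow_dvd p he).
rewrite hzw (step hp he w0 hpw). apply: good_mul; last exact: good_norm1.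
apply: (IH w _ w0).
have := nonunit_norm q0 qu; have := nz_norm_pos w0; have := normM (epow p e) w. rewrite -hzw.
move: hk; move: (eis_norm z) (eis_norm (epow p e)) (eis_norm w) => a b c. nia.
Qed.



Theorem corollary2p2 (t : nat) :
  (0 < t)%N -> (3 %| t)%N ->
  ~ exists z : eis, z <> eis0 /\ I2_star z = t%:R.
Proof.
move=> ht h3 [z [hz H]].
have hN := nz_norm_pos hz.
have hN' : ((eis_norm z)%:~R : rat) != 0 by rewrite intr_eq0; apply/eqP; lia.
have E : ((delta2_star z)%:~R : rat) = (t%:R : rat) * (eis_norm z)%:~R.
  by rewrite -H /I2_star divfK.
have E2 : delta2_star z = t%:Z * eis_norm z.
  apply/eqP. rewrite -subr_eq0 -(intr_eq0 rat) intrD intrN intrM E.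
  have -> : ((t%:Z)%:~R : rat) = t%:R by [].
  by rewrite subrr.
case: (good_delta hz) => k. rewrite E2.
case/dvdnP: h3 => m hm. rewrite hm.
move: (eis_norm z) => n. rewrite PoszM. move=> hh.
have : (Posz m * 3 * n = 3 * k + 1 \/ Posz m * 3 * n = 3 * k + 2) by [].
nia.
Qed.
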